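(* Let $q\in(0,1]$ and $L>0$. Assume: [A1] there exist $C_L>0$, $\varepsilon_L\in(0,1)$ with $P[\sup_{u\in V_T(r)}\mathbb Z_T(u)\ge\exp(-r^{2-\varepsilon_L})]\le C_L/r^L$ for all $r>0$, $T\in\mathbb T$; [A5] there exists $\lambda>0$ with $\lim_{x\to0}p(x)/|x|^q=\lambda$; [A6] for every $j\in\mathcal J^{(0)}$, $(\xi_T^j)^{-1/q}|\alpha_T^j|^{-1}\to0$ in probability; [A8] for all $M>0$, $\sup_{u\in\mathbb U_T,|u|<M}|\mathbb H_T(\theta^*+a_Tu)-\mathbb H_T(\theta^* )|=O_p(1)$; [A9] for all $M>0$, $\sup_{u,v\in\mathbb U_T,|u|,|v|<M,u\ne v}\frac{|\mathbb H_T(\theta^*+a_Tu)-\mathbb H_T(\theta^*+a_Tv)|}{|u-v|^q}=O_p(1)$. If $\hat u_T=a_T^{-1}(\hat\theta_T-\theta^* )=O_p(1)$, then $\tilde u_T=\tilde a_T^{-1}(\hat\theta_T-\theta^* )=O_p(1)$ as $T\to\infty$.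
   Context: Let $\Theta\subset\mathbb R^{\mathsf p}$ be a bounded open set with closure $\overline\Theta$ and $\theta^*\in\Theta$. Let $(\Omega,\mathcal F,P)$ be a probability space, $\mathbb T\subset\mathbb R_{\ge0}$ with $\sup\mathbb T=\infty$; limits $T\to\infty$ are along $\mathbb T$. For each $T\in\mathbb T$, $\mathbb H_T:\Omega\times\overline\Theta\to\mathbb R$ is a random field continuous in $\theta$ for every $\omega$. The penalty is $p_T(\theta)=\sum_{j=1}^{\mathsf p}\xi_T^jp(\theta_j)$ with (possibly random) $\xi_T^j>0$ and $p:\mathbb R\to\mathbb R_{\ge0}$, $p(0)=0$; $\mathbb H^\dagger_T=\mathbb H_T-p_T$, and $\hat\theta_T:\Omega\to\overline\Theta$ is measurable with $\mathbb H^\dagger_T(\hat\theta_T)=\max_{\overline\Theta}\mathbb H^\dagger_T$. $\mathcal J^{(0)}=\{j:\theta^*_j=0\}$, $\mathcal J^{(1)}=\{j:\theta^*_j\ne0\}$. $a_T=\mathrm{diag}(\alpha_T^1,\dots,\alpha_T^{\mathsf p})$ is deterministic, invertible, with $\|a_T\|\to0$ ($\|\cdot\|$ spectral norm). $\mathbb U_T=\{u:\theta^*+a_Tu\in\overline\Theta\}$, $\mathbb Z_T(u)=\exp(\mathbb H_T(\theta^*+a_Tu)-\mathbb H_T(\theta^* ))$, $V_T(r)=\{u\in\mathbb U_T:|u|\ge r\}$ (supremum over the empty set is $-\infty$). $\tilde a_T$ is diagonal with $(\tilde a_T)_{jj}=(\xi_T^j)^{-1/q}$ for $j\in\mathcal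 J^{(0)}$ and $\alpha_T^j$ for $j\in\mathcal J^{(1)}$. $X_T=O_p(1)$ means tightness: for every $\epsilon>0$ there are $\mathcal T\in\mathbb T$, $M>0$ with $P(|X_T|>M)<\epsilon$ for $T\ge\mathcal T$. *)

(* Defs.v *)
From HB Require Import structures.
From mathcomp Require Import all_boot all_order all_algebra.
From mathcomp Require Import all_classical all_reals all_analysis.
Set Implicit Arguments. Unset Strict Implicit. Unset Printing Implicit Defensive.
Import Order.TTheory GRing.Theory Num.Theory.
Import numFieldNormedType.Exports.
Local Open Scope classical_set_scope.
Local Open Scope ring_scope.

Section Defs.
Variables (R : realType) (n : nat).

Definition eucl (u : 'I_n -> R) : R := Num.sqrt (\sum_(j < n) u j ^+ 2).

Definition vdiff (u v : 'I_n -> R) : 'I_n -> R := fun j => u j - v j.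

Definition eopen (O : set ('I_n -> R)) : Prop :=
  forall x, O x -> exists2 e : R, 0 < e & forall y, eucl (vdiff y x) < e -> O y.

Definition ebounded (O : set ('I_n -> R)) : Prop :=
  exists B : R, forall x, O x -> eucl x <= B.

Definition eclosure (O : set ('I_n -> R)) : set ('I_n -> R) :=
  [set x | forall e : R, 0 < e -> exists y, O y /\ eucl (vdiff x y) < e].

Definition econt_on (D : set ('I_n -> R)) (f : ('I_n -> R) -> R) : Prop :=
  forall x, D x -> forall e : R, 0 < e -> exists2 d : R, 0 < d &
    forall y, D y -> eucl (vdiff y x) < d -> `|f y - f x| < e.

Definition along (TT : set R) (Q : R -> Prop) : Prop :=
  exists2 T0, TT T0 & forall T, TT T -> T0 <= T -> Q T.

(** theta* + a_T u, with a_T = diag(alpha_T) *)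
Definition shiftv (thstar : 'I_n -> R) (alpha : R -> 'I_n -> R) (T : R)
  (u : 'I_n -> R) : 'I_n -> R := fun j => thstar j + alpha T j * u j.

Definition UT (Theta : set ('I_n -> R)) thstar alpha T : set ('I_n -> R) :=
  [set u | eclosure Theta (shiftv thstar alpha T u)].

Definition VT Theta thstar alpha T (r : R) : set ('I_n -> R) :=
  [set u | UT Theta thstar alpha T u /\ r <= eucl u].

End Defs.

Section ProbDefs.
Variables (R : realType) (d : measure_display) (Omega : measurableType d)
  (P : probability Omega R).

Definition ZT n (H : R -> Omega -> ('I_n -> R) -> R) thstar alpha T w
  (u : 'I_n -> R) : R :=
  expR (H T w (shiftv thstar alpha T u) - H T w thstar).

Definition OpE1 (TT : set R) (X : R -> Omega -> \bar R) : Prop :=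
  forall eps : R, 0 < eps -> exists M : R, 0 < M /\
    along TT (fun T => (P [set w | (M%:E < `| X T w |)%E] < eps%:E)%E).

Definition Op1 (TT : set R) (X : R -> Omega -> R) : Prop :=
  OpE1 TT (fun T w => (X T w)%:E).

Definition cvg_prob0 (TT : set R) (X : R -> Omega -> R) : Prop :=
  forall eps : R, 0 < eps -> forall eta : R, 0 < eta ->
    along TT (fun T => (P [set w | eps%:E < `| (X T w)%:E |] < eta%:E)%E).

End ProbDefs.

(* Main.v *)
Require Import Defs.
From HB Require Import structures.
From mathcomp Require Import all_boot all_order all_algebra.
From mathcomp Require Import all_classical all_reals all_analysis.
From mathcomp Require Import ring lra.
From mathcomp Require Import measurable_realfun.
Set Implicit Arguments. Unset Strict Implicit. Unset Printing Implicit Defensive.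
Import Order.TTheory GRing.Theory Num.Theory.
Import numFieldNormedType.Exports.
Local Open Scope classical_set_scope.
Local Open Scope ring_scope.
Section Aux.
Variables (R : realType) (n : nat).
Implicit Types (u v : 'I_n -> R).

Lemma eucl_ge0 u : 0 <= eucl u.
Proof. exact: sqrtr_ge0. Qed.

Lemma sq_sum_ge0 u : 0 <= \sum_(j < n) u j ^+ 2.
Proof. by apply: sumr_ge0 => j _; exact: sqr_ge0. Qed.

Lemma coord_le_eucl u j : `|u j| <= eucl u.
Proof.
rewrite /eucl -sqrtr_sqr ler_sqrt; last exact: sq_sum_ge0.
rewrite (bigD1 j) //= lerDl; apply: sumr_ge0 => k _; exact: sqr_ge0.
Qed.

Lemma eucl_sq u : eucl u ^+ 2 = \sum_(j < n) u j ^+ 2.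
Proof. by rewrite /eucl sqr_sqrtr //; exact: sq_sum_ge0. Qed.

Lemma sq_le (x c : R) : `|x| <= c -> x ^+ 2 <= c ^+ 2.
Proof.
move=> h; rewrite -real_normK ?num_real //.
have h0 : 0 <= `|x| by [].
nra.
Qed.

Lemma eucl_le_coord u c : (forall j, `|u j| <= c) ->
  eucl u <= Num.sqrt (n%:R * c ^+ 2).
Proof.
move=> h; rewrite /eucl ler_sqrt.
  have -> : n%:R * c ^+ 2 = \sum_(j < n) c ^+ 2 by rewrite sumr_const card_ord mulr_natl.
  by apply: ler_sum => j _; apply: sq_le.
by apply: mulr_ge0 => //; exact: sqr_ge0.
Qed.

Lemma coord_small (e : R) : 0 < e ->
  exists2 eta : R, 0 < eta & forall u, (forall j, `|u j| < eta) -> eucl u < e.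
Proof.
move=> e0; exists (e / (n%:R + 1)).
  by apply: divr_gt0 => //; rewrite ltr_wpDl.
move=> u hu; apply: (le_lt_trans (@eucl_le_coord u (e / (n%:R + 1)) _)).
  by move=> j; apply: ltW.
rewrite -[X in _ < X](ger0_norm (ltW e0)) -sqrtr_sqr ltr_sqrt; last by rewrite exprn_gt0.
set N := n%:R. have N0 : 0 <= N by [].
set t := e / (N + 1).
have ht : t * (N + 1) = e by rewrite /t mulfVK //; rewrite gt_eqF // ltr_wpDl.
have t0 : 0 < t by apply: divr_gt0 => //; rewrite ltr_wpDl.
rewrite -ht; nra.
Qed.

Lemma pos_below (c : 'I_n -> R) : (forall j, 0 < c j) ->
  exists2 g : R, 0 < g & forall j, g <= c j.
Proof.
move=> hc; have s0 : 0 <= \sum_(j < n) (c j)^-1.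
  by apply: sumr_ge0 => j _; rewrite invr_ge0 ltW.
exists (1 + \sum_(j < n) (c j)^-1)^-1; first by rewrite invr_gt0 ltr_pwDl.
move=> j; rewrite -[c j]invrK lef_pV2 ?posrE ?invr_gt0 ?ltr_pwDl //.
rewrite (bigD1 j) //= addrCA lerDl; apply: addr_ge0 => //.
by apply: sumr_ge0 => k _; rewrite invr_ge0 ltW.
Qed.

Lemma sub_eclosure (Th : set ('I_n -> R)) x : Th x -> eclosure Th x.
Proof.
move=> hx e e0; exists x; split => //.
rewrite /vdiff /eucl (eq_bigr (fun _ => 0)); first by rewrite big1 // sqrtr0.
by move=> j _; rewrite subrr expr0n.
Qed.

Lemma eucl_near u (M : R) : eucl u < M ->
  exists2 tau : R, 0 < tau & forall v, (forall j, `|v j - u j| < tau) -> eucl v < M.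
Proof.
move=> huM; have M0 : 0 < M by apply: le_lt_trans (eucl_ge0 u) huM.
set s := \sum_(j < n) u j ^+ 2.
have sM : s < M ^+ 2.
  by rewrite /s -eucl_sq ltrXn2r //; exact: eucl_ge0.
set G := M ^+ 2 - s. have G0 : 0 < G by rewrite subr_gt0.
pose N : R := n%:R. have N0 : 0 <= N by [].
set tau := Num.min 1 (G / ((N + 1) * (2 * M + 1))).
have Dp : 0 < (N + 1) * (2 * M + 1) by apply: mulr_gt0; rewrite ?ltr_wpDl //; lra.
have t0 : 0 < tau by rewrite /tau lt_min ltr01 /=; apply: divr_gt0.
have t1 : tau <= 1 by rewrite /tau ge_min lexx.
have t2 : tau * ((N + 1) * (2 * M + 1)) <= G.
  by rewrite -ler_pdivlMr // /tau ge_min lexx orbT.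
exists tau => // v hv.
have hj : forall j, v j ^+ 2 <= u j ^+ 2 + tau * (2 * M + 1).
  move=> j; have := hv j; have := coord_le_eucl u j.
  rewrite -(real_normK (num_real (v j))) -(real_normK (num_real (u j))).
  set a := `|u j|; set b := `|v j|.
  have a0 : 0 <= a by exact: normr_ge0. have b0 : 0 <= b by exact: normr_ge0.
  move=> hau hvu.
  have hb : b <= a + tau.
    have := ler_dist_dist (v j) (u j).
    rewrite /b /a; move: hvu; set w := v j - u j => hw h.
    have : `| `|v j| - `|u j| | < tau by apply: le_lt_trans h hw.
    rewrite ltr_norml; lra.
  have haM : a <= M by apply: le_trans hau (ltW huM).
  nra.
rewrite -[X in _ < X](ger0_norm (ltW M0)) -sqrtr_sqr /eucl ltr_sqrt ?exprn_gt0 //.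
apply: (le_lt_trans (ler_sum _ (fun j _ => hj j))).
rewrite big_split /= -/s sumr_const card_ord mulr_natl -/N.
have : N * (tau * (2 * M + 1)) < G.
  have hc : 0 < tau * (2 * M + 1) by apply: mulr_gt0 => //; lra.
  nra.
rewrite /G; lra.
Qed.

End Aux.

Lemma eucl0 (R : realType) (n : nat) : eucl (fun _ : 'I_n => 0 : R) = 0.
Proof. by rewrite /eucl big1 ?sqrtr0 // => j _; rewrite expr0n. Qed.

Section Meas.
Variables (R : realType) (d : measure_display) (Omega : measurableType d).

Lemma meas_gt (f : Omega -> R) (K : R) : measurable_fun setT f ->
  measurable [set w | K < f w].
Proof.
move=> mf.
suff -> : [set w | K < f w] = setT `&` f @^-1` `]K, +oo[.
  exact: mf (measurable_itv _).
apply/seteqP; split => w /=.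
  by move=> h; split => //; rewrite /= in_itv /= andbT.
by move=> [_]; rewrite /= in_itv /= andbT.
Qed.

Lemma meas_gtE (f : Omega -> R) (K : R) : measurable_fun setT f ->
  measurable [set w | (K%:E < `|(f w)%:E|)%E].
Proof.
move=> mf; suff -> : [set w | (K%:E < `|(f w)%:E|)%E] = [set w | K < `|f w|].
  apply: meas_gt; apply: measurableT_comp mf.
  exact: measurable_realfun.normr_measurable.
by apply/seteqP; split => w /=; rewrite ?abse_EFin lte_fin.
Qed.

Lemma meas_eucl (n : nat) (f : Omega -> 'I_n -> R) :
  (forall j, measurable_fun setT (fun w => f w j)) ->
  measurable_fun setT (fun w => eucl (f w)).
Proof.
move=> mf; rewrite /eucl.
have -> : (fun w => Num.sqrt (\sum_(j < n) f w j ^+ 2)) =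
  Num.sqrt \o (fun w => \sum_(j < n) f w j ^+ 2) by [].
apply: measurableT_comp.
  exact: continuous_measurable_fun (@sqrt_continuous R).
apply: measurable_sum => j; exact: measurable_funX.
Qed.

Variables (n : nat) (Theta : set ('I_n -> R)) (thstar : 'I_n -> R)
  (H : R -> Omega -> ('I_n -> R) -> R) (alpha : R -> 'I_n -> R) (T : R).
Hypotheses (HTheta_open : eopen Theta) (Hthstar : Theta thstar)
  (Hmeas : forall theta, eclosure Theta theta ->
      measurable_fun setT (fun w => H T w theta))
  (Hcont : forall w, econt_on (eclosure Theta) (H T w))
  (Hanz : forall j, alpha T j != 0).

Let thr (r : {ffun 'I_n -> rat}) : 'I_n -> R := fun j => ratr (r j).
Let ur (r : {ffun 'I_n -> rat}) : 'I_n -> R :=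
  fun j => (thr r j - thstar j) / alpha T j.

Let shift_ur r : shiftv thstar alpha T (ur r) = thr r.
Proof.
by apply/funext => j; rewrite /shiftv /ur mulrC divfK // addrC subrK.
Qed.

Let shift0 : shiftv thstar alpha T (fun _ => 0) = thstar.
Proof. by apply/funext => j; rewrite /shiftv mulr0 addr0. Qed.

Lemma sup_event_meas (M K : R) : 0 < M ->
  measurable [set w | (K%:E < `| ereal_sup
    [set (`|H T w (shiftv thstar alpha T u) - H T w thstar|)%:E
    | u in [set u | UT Theta thstar alpha T u /\ (eucl u < M)%R]] |)%E].
Proof.
move=> M0.
pose F (k : nat) := [set w | exists r : {ffun 'I_n -> rat},
  unpickle k = Some r /\ (Theta (thr r) /\ eucl (ur r) < M) /\
  K < `|H T w (thr r) - H T w thstar|].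
have mF : forall k, measurable (F k).
  move=> k; case E: (unpickle k) => [r|]; last first.
    suff -> : F k = set0 by [].
    by apply/seteqP; split => w //= [r [] ]; rewrite E.
  case: (pselect (Theta (thr r) /\ eucl (ur r) < M)) => g; last first.
    suff -> : F k = set0 by [].
    by apply/seteqP; split => w //= [r' [] ]; rewrite E => -[<-] [].
  suff -> : F k = [set w | K < `|H T w (thr r) - H T w thstar|].
    apply: meas_gt; apply: measurableT_comp; first exact: measurable_realfun.normr_measurable.
    apply: measurable_funB; apply: Hmeas; last exact: sub_eclosure.
    exact: sub_eclosure (proj1 g).
  apply/seteqP; split => w /=.
    by move=> [r' [] ]; rewrite E => -[<-] [].
  by move=> h; exists r; split.
suff -> : [set w | (K%:E < `| ereal_sup
    [set (`|H T w (shiftv thstar alpha T u) - H T w thstar|)%:E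
    | u in [set u | UT Theta thstar alpha T u /\ (eucl u < M)%R]] |)%E]
   = \bigcup_(k in setT) F k.
  exact: bigcup_measurable.
apply/seteqP; split => w /=; last first.
  move=> [k _ [r [_ [[Tr Mr] Kr]]]].
  apply: (@lt_le_trans _ _ (`|H T w (thr r) - H T w thstar|)%:E).
    by rewrite lte_fin.
  apply: le_trans (lee_abs _); apply: ereal_sup_ubound.
  exists (ur r); last by rewrite shift_ur.
  by split => //; rewrite /UT /= shift_ur; exact: sub_eclosure.
move=> hK.
have sup0 : (0 <= ereal_sup
    [set (`|H T w (shiftv thstar alpha T u) - H T w thstar|)%:E
    | u in [set u | UT Theta thstar alpha T u /\ (eucl u < M)%R]])%E.
  apply: ereal_sup_ubound; exists (fun _ => 0).
    by split; [rewrite /UT /= shift0; exact: sub_eclosure | rewrite eucl0].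
  by rewrite shift0 subrr normr0.
rewrite gee0_abs // in hK.
have [_ [u [hU hM] <-] Ky] := ereal_sup_gt hK.
rewrite lte_fin in Ky.
set th := shiftv thstar alpha T u.
set g := `|H T w th - H T w thstar| in Ky *.
have e0 : 0 < g - K by rewrite subr_gt0.
have [dd dd0 hd] := Hcont w hU e0.
have [etab etab0 hb] := coord_small n dd0.
have [tau tau0 htau] := eucl_near hM.
pose c j := Num.min etab (tau * `|alpha T j|).
have c0 : forall j, 0 < c j.
  move=> j; rewrite /c lt_min etab0 /=; apply: mulr_gt0 => //.
  by rewrite normr_gt0.
have [g1 g10 hg1] := pos_below c0.
have g20 : 0 < g1 / 2 by apply: divr_gt0.
have [y [Ty hy]] := hU _ g20.
have [rho rho0 hrho] := HTheta_open Ty.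
have [etaa etaa0 ha] := coord_small n rho0.
have : forall j, exists q : rat, `|ratr q - y j| < Num.min etaa (g1 / 2).
  move=> j; set m := Num.min etaa (g1 / 2).
  have m0 : 0 < m by rewrite /m lt_min etaa0 g20.
  have [q hq] := @rat_in_itvoo R (y j - m) (y j + m) ltac:(lra).
  exists q; move: hq; rewrite in_itv /= => /andP [h1 h2].
  rewrite ltr_norml; apply/andP; split; lra.
case/choice => f hf.
pose r : {ffun 'I_n -> rat} := [ffun j => f j].
have thr_r : forall j, thr r j = ratr (f j) by move=> j; rewrite /thr ffunE.
have c1 : forall j, `|thr r j - th j| < g1.
  move=> j; have := hf j; have := coord_le_eucl (vdiff th y) j.
  rewrite thr_r /vdiff lt_min => h1 /andP [_ h2].
  have h1' := le_lt_trans h1 hy.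
  move: h1' h2; rewrite !ltr_norml => /andP [h3 h4] /andP [h5 h6].
  apply/andP; split; lra.
exists (pickle r) => //; exists r; split; first by rewrite pickleK.
have Ttr : Theta (thr r).
  apply: hrho; apply: ha => j; rewrite /vdiff.
  by have := hf j; rewrite -thr_r lt_min => /andP [].
split; first split => //.
- apply: htau => j.
  have -> : ur r j - u j = (thr r j - th j) / alpha T j.
    rewrite /ur /th /shiftv; field; exact: Hanz.
  rewrite normrM normfV ltr_pdivrMr ?normr_gt0 //.
  apply: lt_le_trans (c1 j) _; apply: le_trans (hg1 j) _.
  by rewrite /c ge_min lexx orbT.
- have hH : `|H T w (thr r) - H T w th| < g - K.
    apply: hd; first exact: sub_eclosure.
    apply: hb => j; rewrite /vdiff.
    apply: lt_le_trans (c1 j) _; apply: le_trans (hg1 j) _.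
    by rewrite /c ge_min lexx.
  have := ler_distD (H T w (thr r)) (H T w th) (H T w thstar).
  rewrite -/g distrC; lra.
Qed.
End Meas.

Lemma eucl_mono (R : realType) (n : nat) (u v : 'I_n -> R) :
  (forall j, `|v j| <= `|u j|) -> eucl v <= eucl u.
Proof.
move=> h; rewrite /eucl ler_sqrt; last exact: sq_sum_ge0.
apply: ler_sum => j _; rewrite -(real_normK (num_real (u j))).
exact: sq_le.
Qed.

Section Core.
Set Default Proof Using "All".
Variables (R : realType) (n : nat) (Theta : set ('I_n -> R))
  (thstar : 'I_n -> R) (Hf : ('I_n -> R) -> R) (pen : R -> R)
  (xi : 'I_n -> R) (th : 'I_n -> R) (alpha : R -> 'I_n -> R) (T : R)
  (q lam delta eta K M1 e : R).
Hypotheses (Hpen0 : pen 0 = 0) (Hpen_nonneg : forall x, 0 <= pen x)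
  (Hxi : forall j, 0 < xi j) (Hth : eclosure Theta th)
  (Hmax : forall theta, eclosure Theta theta ->
      Hf theta - \sum_(j < n) xi j * pen (theta j)
      <= Hf th - \sum_(j < n) xi j * pen (th j))
  (Hanz : forall j, alpha T j != 0) (He : 0 < e)
  (Hal : forall j, `|alpha T j| < e)
  (Hq : 0 < q) (Hlam : 0 < lam) (HM1 : 0 <= M1)
  (Heps : e * (M1 + 1) <= Num.min delta eta)
  (Hpen : forall x, 0 < `|x| < delta -> lam / 2 * `|x| `^ q < pen x)
  (Heta : forall y, (forall j, `|y j - thstar j| < eta) -> Theta y)
  (Huh : eucl (fun j => (th j - thstar j) / alpha T j) <= M1)
  (HK : forall u, eclosure Theta (shiftv thstar alpha T u) -> eucl u < M1 + 1 ->
      `|Hf (shiftv thstar alpha T u) - Hf thstar| <= K).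

Let uh j := (th j - thstar j) / alpha T j.

Lemma core_bound : eucl (fun j =>
     if thstar j == 0 then (th j - thstar j) * xi j `^ q^-1
     else (th j - thstar j) / alpha T j)
  <= Num.sqrt (n%:R * (Num.max M1 ((4 * K / lam) `^ q^-1)) ^+ 2).
Proof.
have shuh : shiftv thstar alpha T uh = th.
  by apply/funext => j; rewrite /shiftv /uh mulrC divfK // addrC subrK.
pose v j := if thstar j == 0 then 0 else uh j.
pose thc j := if thstar j == 0 then 0 else th j.
have shv : shiftv thstar alpha T v = thc.
  apply/funext => j; rewrite /shiftv /v /thc.
  case: eqP => [->|_]; first by rewrite mulr0 addr0.
  by rewrite -/(shiftv thstar alpha T uh j) shuh.
have uhM : forall j, `|uh j| <= M1 by move=> j; exact: le_trans (coord_le_eucl _ j) Huh.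
have dth : forall j, `|th j - thstar j| < Num.min delta eta.
  move=> j; have -> : th j - thstar j = alpha T j * uh j.
    by rewrite /uh mulrC divfK.
  rewrite normrM; apply: le_lt_trans (_ : e * M1 < _); last first.
    apply: lt_le_trans Heps; rewrite ltr_pM2l //; lra.
  apply: ler_pM => //; exact: ltW.
have Tthc : Theta thc.
  apply: Heta => j; rewrite /thc; case: eqP => [->|_].
    by rewrite subrr normr0; have := dth j; rewrite lt_min => /andP [h1 h2]; apply: le_lt_trans h2.
  by have := dth j; rewrite lt_min => /andP [].
have vM : eucl v < M1 + 1.
  apply: le_lt_trans (_ : eucl uh < _); last by apply: le_lt_trans Huh _; lra.
  by apply: eucl_mono => j; rewrite /v; case: eqP => _ //; rewrite normr0.
have K1 : `|Hf th - Hf thstar| <= K.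
  rewrite -{1}shuh; apply: HK; first by rewrite shuh.
  by apply: le_lt_trans Huh _; lra.
have K2 : `|Hf thc - Hf thstar| <= K.
  rewrite -shv; apply: HK; last exact: vM.
  by rewrite shv; exact: sub_eclosure.
have hmax := Hmax (sub_eclosure Tthc).
have sumD : \sum_(j < n) xi j * pen (th j) - \sum_(j < n) xi j * pen (thc j)
   = \sum_(j < n) (if thstar j == 0 then xi j * pen (th j) else 0).
  rewrite -sumrB; apply: eq_bigr => j _; rewrite /thc.
  by case: eqP => _; rewrite ?Hpen0 ?mulr0 ?subr0 // subrr.
have D2K : \sum_(j < n) (if thstar j == 0 then xi j * pen (th j) else 0) <= 2 * K.
  rewrite -sumD.
  have := ler_distD (Hf thstar) (Hf th) (Hf thc).
  rewrite (distrC (Hf thstar)) => h.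
  have h2 : Hf th - Hf thc <= `|Hf th - Hf thc| by exact: ler_norm.
  lra.
have Dj : forall j, thstar j = 0 -> xi j * pen (th j) <= 2 * K.
  move=> j hj; apply: le_trans D2K; rewrite (bigD1 j) //= hj eqxx lerDl.
  apply: sumr_ge0 => k _; case: eqP => _ //.
  by apply: mulr_ge0; [exact: ltW | exact: Hpen_nonneg].
apply: eucl_le_coord => j.
case: eqP => hj; last first.
  by apply: le_trans (uhM j) _; rewrite le_max lexx.
apply: le_trans (_ : (4 * K / lam) `^ q^-1 <= _); last by rewrite le_max lexx orbT.
rewrite hj subr0 normrM (ger0_norm (powR_ge0 _ _)).
have [->|thj0] := eqVneq (th j) 0.
  by rewrite normr0 mul0r powR_ge0.
have ax : 0 < `|th j| by rewrite normr_gt0.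
have adl : `|th j| < delta.
  by have := dth j; rewrite hj subr0 lt_min => /andP [].
have hp := Hpen (x := th j); rewrite ax adl /= in hp; have {}hp := hp isT.
have xq : 0 < `|th j| `^ q by apply: powR_gt0.
have hxi := Hxi j.
have bnd : `|th j| `^ q * xi j <= 4 * K / lam.
  rewrite ler_pdivlMr //.
  have := Dj j hj.
  have : xi j * (lam / 2 * `|th j| `^ q) <= xi j * pen (th j).
    by rewrite ler_pM2l // ltW.
  move=> h1 h2; have : xi j * (lam / 2 * `|th j| `^ q) <= 2 * K by lra.
  have -> : xi j * (lam / 2 * `|th j| `^ q) = (`|th j| `^ q * xi j * lam) / 2.
    by rewrite mulrC; field.
  lra.
have -> : `|th j| = (`|th j| `^ q) `^ q^-1.
  by rewrite -powRrM divff ?gt_eqF // powRr1.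
rewrite -(powRM _ (ltW xq) (ltW hxi)); have h0 : 0 <= q^-1 by rewrite invr_ge0 ltW.
apply: (ge0_ler_powR h0 _ _ bnd).
- by rewrite nnegrE; apply: mulr_ge0; apply: ltW.
- by rewrite nnegrE; apply: le_trans bnd; apply: mulr_ge0; apply: ltW.
Qed.
End Core.

Lemma along2 (R : realType) (TT : set R) (P Q : R -> Prop) :
  along TT P -> along TT Q -> along TT (fun T => P T /\ Q T).
Proof.
move=> [T1 h1 p] [T2 h2 q']; case/orP: (le_total T1 T2) => h.
  exists T2 => // T hT hle; split; [exact: p hT (le_trans h hle) | exact: q'].
exists T1 => // T hT hle; split; [exact: p | exact: q' hT (le_trans h hle)].
Qed.

Lemma pen_lb (R : realType) (pen : R -> R) (q lam : R) : 0 < lam ->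
  (fun x : R => pen x / `|x| `^ q) @ 0^' --> lam ->
  exists2 delta : R, 0 < delta &
    forall x, 0 < `|x| < delta -> lam / 2 * `|x| `^ q < pen x.
Proof.
move=> lam0 hl.
have hz : lam / 2 < lam by lra.
have := @cvgr_gt _ _ _ _ _ lam hl _ hz.
move=> /(_ (dnbhs_filter _)); rewrite near_withinE => /nbhs_ballP [dl dl0 hb].
exists dl => // x /andP [x0 xd].
have bx : ball (0 : R) dl x by rewrite /ball /= sub0r normrN.
have := hb x bx; rewrite /= -normr_gt0 => /(_ x0).
have xq : 0 < `|x| `^ q by apply: powR_gt0.
by rewrite ltr_pdivlMr.
Qed.
Unset Implicit Arguments.
Unset Strict Implicit.

Theorem theorem3
  (R : realType) (n : nat)
  (Theta : set ('I_n -> R)) (thstar : 'I_n -> R)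
  (d : measure_display) (Omega : measurableType d) (P : probability Omega R)
  (TT : set R)
  (H : R -> Omega -> ('I_n -> R) -> R)
  (pen : R -> R) (xi : R -> Omega -> 'I_n -> R)
  (thhat : R -> Omega -> 'I_n -> R)
  (alpha : R -> 'I_n -> R)
  (q L : R)
  (* Theta bounded open, theta* in Theta *)
  (HTheta_open : eopen Theta) (HTheta_bdd : ebounded Theta)
  (Hthstar : Theta thstar)
  (* index set TT in [0, oo) with sup TT = oo *)
  (HTT_nonneg : forall T, TT T -> 0 <= T)
  (HTT_unbdd : forall M : R, exists2 T, TT T & M <= T)
  (* random field: measurable in omega, continuous on the closure in theta *)
  (HH_meas : forall T theta, TT T -> eclosure Theta theta ->
      measurable_fun setT (fun w => H T w theta))
  (HH_cont : forall T w, TT T -> econt_on (eclosure Theta) (H T w))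
  (* penalty *)
  (Hpen_nonneg : forall x, 0 <= pen x) (Hpen0 : pen 0 = 0)
  (Hxi_pos : forall T w j, TT T -> 0 < xi T w j)
  (Hxi_meas : forall T j, TT T -> measurable_fun setT (fun w => xi T w j))
  (* the penalized estimator: measurable maximizer over the closure *)
  (Hthhat_meas : forall T j, TT T -> measurable_fun setT (fun w => thhat T w j))
  (Hthhat_in : forall T w, TT T -> eclosure Theta (thhat T w))
  (Hthhat_max : forall T w theta, TT T -> eclosure Theta theta ->
      H T w theta - \sum_(j < n) xi T w j * pen (theta j)
      <= H T w (thhat T w) - \sum_(j < n) xi T w j * pen (thhat T w j))
  (* a_T = diag(alpha_T) deterministic, invertible, ||a_T|| -> 0 *)
  (Halpha_nz : forall T j, TT T -> alpha T j != 0)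
  (Halpha_0 : forall e : R, 0 < e ->
      along TT (fun T => forall j, `|alpha T j| < e))
  (Hq : 0 < q <= 1) (HL : 0 < L)
  (* [A1] *)
  (HA1 : exists CL epsL : R, 0 < CL /\ 0 < epsL < 1 /\
     forall r : R, 0 < r -> forall T, TT T ->
       (P [set w | (expR (- r `^ (2 - epsL)))%:E <=
            ereal_sup [set (ZT H thstar alpha T w u)%:E
                      | u in VT Theta thstar alpha T r] ]
        <= (CL / r `^ L)%:E)%E)
  (* [A5] *)
  (HA5 : exists2 lam : R, 0 < lam &
     (fun x : R => pen x / `|x| `^ q) @ 0^' --> lam)
  (* [A6] *)
  (HA6 : forall j, thstar j = 0 ->
     cvg_prob0 P TT (fun T w => xi T w j `^ (- q^-1) * `|alpha T j|^-1))
  (* [A8] *)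
  (HA8 : forall M : R, 0 < M ->
     OpE1 P TT (fun T w => ereal_sup
       [set (`|H T w (shiftv thstar alpha T u) - H T w thstar|)%:E
       | u in [set u | UT Theta thstar alpha T u /\ eucl u < M]]))
  (* [A9] *)
  (HA9 : forall M : R, 0 < M ->
     OpE1 P TT (fun T w => ereal_sup
       [set (`|H T w (shiftv thstar alpha T uv.1) - H T w (shiftv thstar alpha T uv.2)|
             / eucl (vdiff uv.1 uv.2) `^ q)%:E
       | uv in [set uv : ('I_n -> R) * ('I_n -> R) |
           [/\ UT Theta thstar alpha T uv.1, UT Theta thstar alpha T uv.2,
               eucl uv.1 < M, eucl uv.2 < M & uv.1 <> uv.2]]])) :
  (* if hat u_T = a_T^{-1}(hat theta_T - theta* ) is O_p(1) ... *)
  Op1 P TT (fun T w => eucl (fun j => (thhat T w j - thstar j) / alpha T j)) ->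
  (* ... then tilde u_T = tilde a_T^{-1}(hat theta_T - theta* ) is O_p(1) *)
  Op1 P TT (fun T w => eucl (fun j =>
     if thstar j == 0 then (thhat T w j - thstar j) * xi T w j `^ q^-1
     else (thhat T w j - thstar j) / alpha T j)).
Proof.
move=> Hu eps eps0.
have e20 : 0 < eps / 2 by apply: divr_gt0.
have [M1 [M10 hM1]] := Hu _ e20.
have M1p : 0 < M1 + 1 by lra.
have [K [K0 hK]] := HA8 _ M1p _ e20.
case: HA5 => lam lam0 hlam.
have [delta delta0 hdelta] := pen_lb lam0 hlam.
have [rho rho0 hrho] := HTheta_open _ Hthstar.
have [eta eta0 heta] := coord_small n rho0.
pose e := Num.min delta eta / (M1 + 1).
have mde0 : 0 < Num.min delta eta by rewrite lt_min delta0 eta0.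
have e0 : 0 < e by apply: divr_gt0.
have Heps : e * (M1 + 1) <= Num.min delta eta.
  by rewrite /e mulfVK ?gt_eqF.
pose C1 := Num.max M1 ((4 * K / lam) `^ q^-1).
pose B := Num.sqrt (n%:R * C1 ^+ 2) + 1.
have B0 : 0 < B by rewrite /B; have := sqrtr_ge0 (n%:R * C1 ^+ 2); lra.
exists B; split => //.
have [T0 T0in hT0] := along2 (along2 hM1 hK) (Halpha_0 e e0).
exists T0 => // T TTT T0T.
have [[hA hS] hal] := hT0 T TTT T0T.
have q0 : 0 < q by case/andP: Hq.
set A := [set w | _] in hA.
set S := [set w | _] in hS.
set E := [set w | _].
have mthh : forall j, measurable_fun setT (fun w => thhat T w j).
  by move=> j; exact: Hthhat_meas.
have mA : measurable A.
  apply: meas_gtE; apply: meas_eucl => j.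
  apply: measurable_funM; first by apply: measurable_funB => //; exact: measurable_cst.
  exact: measurable_cst.
have mE : measurable E.
  apply: meas_gtE; apply: meas_eucl => j.
  case: eqP => _.
    apply: measurable_funM; first by apply: measurable_funB => //; exact: measurable_cst.
    exact: (measurableT_comp (measurable_powR _) (Hxi_meas _ j TTT)).
  apply: measurable_funM; first by apply: measurable_funB => //; exact: measurable_cst.
  exact: measurable_cst.
have mS : measurable S.
  apply: sup_event_meas => //.
  - by move=> theta hth; exact: HH_meas.
  - by move=> w; exact: HH_cont.
  - by move=> j; exact: Halpha_nz.
have sub : E `<=` A `|` S.
  move=> w Ew; case: (pselect (A w)) => hAw; first by left.
  right; apply: contrapT => nS; move: Ew; rewrite /E /= ?abse_EFin lte_fin.
  rewrite ger0_norm ?eucl_ge0 //.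
  apply/negP; rewrite -leNgt.
  apply: le_trans (_ : Num.sqrt (n%:R * C1 ^+ 2) <= B); last by rewrite /B lerDl.
  apply: (core_bound Hpen0 Hpen_nonneg (fun j => Hxi_pos T w j TTT)
    (Hthhat_in T w TTT) (fun th h => Hthhat_max T w th TTT h)
    (fun j => Halpha_nz T j TTT) e0 hal q0 lam0 (ltW M10) Heps hdelta
    (fun y hy => hrho y (heta _ hy))).
  - move: hAw; rewrite /A /= ?abse_EFin lte_fin ger0_norm ?eucl_ge0 //.
    by move/negP; rewrite -leNgt.
  - move=> u hu huM.
    move/negP: nS; rewrite -leNgt => nS.
    have : ((`|H T w (shiftv thstar alpha T u) - H T w thstar|)%:E <= K%:E)%E.
      apply: le_trans nS; apply: le_trans (lee_abs _).
      by apply: ereal_sup_ubound; exists u.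
    by rewrite lee_fin.
apply: (@le_lt_trans _ _ (P (A `|` S))).
  by apply: le_measure => //; rewrite inE //; exact: measurableU.
apply: le_lt_trans (measureU2 P mA mS) _.
by rewrite [eps]splitr EFinD; apply: lteD.
Qed.
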